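(* In the setting below, the image of $\bar\rho\colon\bar G\to\bar A$ is a normal subgroup of $\bar A$.
   Context: Let $G$ be a group generated by $a_1,\dots,a_n$ with $z=a_1\cdots a_n$ central. Let $S_1,\dots,S_m\subseteq\{1,\dots,n\}$ with $|S_i\cap S_r|\le1$ for $i\neq r$. For $S\subseteq\{1,\dots,n\}$ let $G_S$ be the quotient of $G$ by the normal closure of $\{a_j:j\notin S\}$; let $a_{ij}$ be the image of $a_j$ in $G_{S_i}$ and $z_i=a_{i1}\cdots a_{in}$ (central in $G_{S_i}$). Let $\bar G=G/\langle z\rangle$, $\bar G_{S_i}=G_{S_i}/\langle z_i\rangle$, and assume each $\bar G_{S_i}$ is free of rank $|S_i|-1$, the images of any $|S_i|-1$ of the $a_{ij}$, $j\in S_i$, forming a free basis. Let $\bar A=\prod_{i=1}^m\bar G_{S_i}$ and $\bar\rho\colon\bar G\to\bar A$ the homomorphism induced by the product of the projections $G\to G_{S_i}$. *)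

(* Defs.v *)
From mathcomp Require Import all_boot.
Set Implicit Arguments. Unset Strict Implicit. Unset Printing Implicit Defensive.

Record grp := Grp {
  car :> Type;
  gmul : car -> car -> car;
  gone : car;
  ginv : car -> car;
  gmulA : forall x y z, gmul x (gmul y z) = gmul (gmul x y) z;
  gmul1 : forall x, gmul gone x = x;
  gmulV : forall x, gmul (ginv x) x = gone }.

Arguments gmul {g}. Arguments gone {g}. Arguments ginv {g}.

Section Grp.
Variable G : grp.

Definition is_subgroup (P : G -> Prop) : Prop :=
  P gone /\ (forall x y, P x -> P y -> P (gmul x y)) /\ (forall x, P x -> P (ginv x)).

Definition is_normal (P : G -> Prop) : Prop :=
  is_subgroup P /\ (forall x g, P x -> P (gmul (gmul (ginv g) x) g)).

Definition gen_subgroup (X : G -> Prop) : G -> Prop :=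
  fun g => forall P, is_subgroup P -> (forall x, X x -> P x) -> P g.

Definition normal_closure (X : G -> Prop) : G -> Prop :=
  fun g => forall P, is_normal P -> (forall x, X x -> P x) -> P g.

Definition prodl (n : nat) (a : 'I_n -> G) : G :=
  foldr (fun i acc => gmul (a i) acc) gone (enum 'I_n).

(* The free basis property of a family b in the quotient group G / M
   (M a normal subgroup): universal property, stated through
   homomorphisms of G killing M (= homomorphisms out of G / M), with
   uniqueness as maps on G / M. *)
Definition free_basis_mod (M : G -> Prop) (I : Type) (b : I -> G) : Prop :=
  forall (H : grp) (f : I -> H), exists phi : G -> H,
    [/\ (forall x y, phi (gmul x y) = gmul (phi x) (phi y)),
        (forall x, M x -> phi x = gone),
        (forall i, phi (b i) = f i) &
        (forall psi : G -> H,
           (forall x y, psi (gmul x y) = gmul (psi x) (psi y)) ->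
           (forall x, M x -> psi x = gone) ->
           (forall i, psi (b i) = f i) ->
           forall x, psi x = phi x)].

End Grp.

(* Kernel of G -> G_S : normal closure of {a_j : j \notin S}. *)
Definition kerS (G : grp) (n : nat) (a : 'I_n -> G) (S : {set 'I_n}) : G -> Prop :=
  normal_closure (fun x => exists j, j \notin S /\ x = a j).

(* Kernel of G -> Gbar_S = G_S / <z_S> : preimage of <z_S>, i.e. the
   elements g with g * c^-1 in kerS for some c in <z>, z = a_1 ... a_n
   (z_S is the image of z). *)
Definition kerSbar (G : grp) (n : nat) (a : 'I_n -> G) (S : {set 'I_n}) : G -> Prop :=
  fun g => exists c, gen_subgroup (fun x => x = prodl a) c /\
                     kerS a S (gmul g (ginv c)).

(* Main.v *)
Require Import Defs.
From mathcomp Require Import all_boot.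
From Stdlib Require Import FunctionalExtensionality.

Section GL.
Variable G : grp.
Implicit Types x y z g : G.
Local Notation "x * y" := (gmul x y).
Local Notation "x ^-1" := (ginv x).
Local Notation "1" := (@gone G).

Lemma gmulVr x : x * x^-1 = 1.
Proof.
rewrite -{1}(gmul1 (x * x^-1)) -{1}(gmulV x^-1) -gmulA (gmulA x^-1 x) gmulV gmul1.
by rewrite gmulV.
Qed.

Lemma gmulr1 x : x * 1 = x.
Proof. by rewrite -(gmulV x) gmulA gmulVr gmul1. Qed.

Lemma ginvK x : x^-1^-1 = x.
Proof. by rewrite -(gmulr1 (x^-1^-1)) -(gmulV x) gmulA gmulV gmul1. Qed.

Lemma ginv1 : (1 : G)^-1 = 1.
Proof. by rewrite -{2}(gmulV 1) gmulr1. Qed.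

Lemma inv_uniq u v : u * v = 1 -> v^-1 = u.
Proof. by move=> e; rewrite -(gmul1 v^-1) -e -gmulA gmulVr gmulr1. Qed.

Lemma ginvM x y : (x * y)^-1 = y^-1 * x^-1.
Proof.
apply: inv_uniq.
by rewrite -gmulA (gmulA x^-1) gmulV gmul1 gmulV.
Qed.

Definition cg (P : G -> Prop) x y := P (x * y^-1).

Section N.
Variable P : G -> Prop.
Hypothesis HP : is_normal P.

Lemma nP1 : P 1. Proof. by have [[h1 [h2 h3]] h4] := HP. Qed.
Lemma nPM {x y} : P x -> P y -> P (x * y). Proof. by have [[h1 [h2 h3]] h4] := HP; apply: h2. Qed.
Lemma nPV {x} : P x -> P x^-1. Proof. by have [[h1 [h2 h3]] h4] := HP; apply: h3. Qed.
Lemma nPJ {x} g : P x -> P (g^-1 * x * g). Proof. by have [[h1 [h2 h3]] h4] := HP; apply: h4. Qed.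

Lemma cg_refl x : cg P x x. Proof. by rewrite /cg gmulVr; apply: nP1. Qed.
Lemma cg_sym x y : cg P x y -> cg P y x.
Proof. by move=> /nPV; rewrite /cg ginvM ginvK. Qed.
Lemma cg_trans x y z : cg P x y -> cg P y z -> cg P x z.
Proof.
move=> h1 h2; have := nPM h1 h2.
by rewrite /cg -gmulA (gmulA y^-1) gmulV gmul1.
Qed.
Lemma cg_mul x x' y y' : cg P x x' -> cg P y y' -> cg P (x * y) (x' * y').
Proof.
move=> h1 h2; rewrite /cg ginvM.
have h3 := nPJ (x^-1) h2; rewrite ginvK in h3.
have := nPM h3 h1.
rewrite -!gmulA (gmulA x^-1) gmulV gmul1.
by rewrite !gmulA.
Qed.
Lemma cg_inv x x' : cg P x x' -> cg P x^-1 x'^-1.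
Proof.
move=> h; rewrite /cg ginvK.
have := nPJ x (nPV h); rewrite ginvM ginvK.
by rewrite -!gmulA gmulV gmulr1.
Qed.
Lemma cg_1 x : P x -> cg P x 1.
Proof. by rewrite /cg ginv1 gmulr1. Qed.
End N.

Lemma gen_subgroup_sub (X : G -> Prop) : is_subgroup (gen_subgroup X).
Proof.
split; [|split].
- by move=> Q [].
- move=> x y hx hy Q hQ hX; have [_ [h2 _]] := hQ; apply: h2; [apply: hx|apply: hy] => //.
- move=> x hx Q hQ hX; have [_ [_ h3]] := hQ; apply: h3; apply: hx => //.
Qed.

Definition central c := forall g, c * g = g * c.

Lemma central_sub : is_subgroup central.
Proof.
split; [|split].
- by move=> g; rewrite gmul1 gmulr1.
- by move=> c d hc hd g; rewrite -gmulA hd gmulA hc gmulA.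
- move=> c hc g.
  rewrite -{1}(gmulr1 g) -(gmulVr c) (gmulA g) -hc -!gmulA (gmulA c^-1) gmulV gmul1.
  done.
Qed.

Lemma sub_ind (P Q : G -> Prop) : is_subgroup Q -> (forall x, P x -> Q x) ->
  forall g, gen_subgroup P g -> Q g.
Proof. by move=> hQ hPQ g hg; apply: hg. Qed.

End GL.
Arguments central {G}. Arguments cg {G}. Arguments sub_ind {G}.
Arguments gen_subgroup_sub {G}. Arguments central_sub {G}.
Arguments nP1 {G P}. Arguments nPM {G P} HP {x y} : rename. Arguments nPV {G P} HP {x} : rename.
Arguments nPJ {G P} HP {x} : rename. Arguments cg_refl {G P}. Arguments cg_sym {G P} HP {x y} : rename.
Arguments cg_trans {G P} HP {x y z} : rename. Arguments cg_mul {G P} HP {x x' y y'} : rename.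
Arguments cg_inv {G P} HP {x x'} : rename. Arguments cg_1 {G P x}.

Lemma normal_closure_normal {G : grp} (X : G -> Prop) : is_normal (normal_closure X).
Proof.
split; [split; [|split]|].
- by move=> Q [[]].
- by move=> x y hx hy Q hQ hX; apply: (nPM hQ); [apply: hx|apply: hy].
- by move=> x hx Q hQ hX; apply: (nPV hQ); apply: hx.
- by move=> x g hx Q hQ hX; apply: (nPJ hQ); apply: hx.
Qed.

Lemma normal_closure_in {G : grp} (X : G -> Prop) x : X x -> normal_closure X x.
Proof. by move=> hx Q _; apply. Qed.


Section Main.
Variable G : grp.
Variables n m : nat.
Variable a : 'I_n -> G.
Variable S : 'I_m -> {set 'I_n}.
Hypothesis Hz : forall g : G, gmul (prodl a) g = gmul g (prodl a).
Local Notation "x * y" := (gmul x y).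
Local Notation "x ^-1" := (ginv x).
Local Notation "1" := (@gone G).

Lemma zcentral {c} : gen_subgroup (fun x => x = prodl a) c -> central c.
Proof. apply: sub_ind; first exact: central_sub. by move=> x ->. Qed.

Lemma N_normal (T : {set 'I_n}) : is_normal (kerSbar a T).
Proof.
have KN := normal_closure_normal (fun x => exists j, j \notin T /\ x = a j).
have [Z1 [ZM ZV]] := gen_subgroup_sub (fun x : G => x = prodl a).
split; [split; [|split]|].
- exists 1; split => //; rewrite ginv1 gmul1; exact: nP1.
- move=> x y [c [hc hx]] [d [hd hy]]; exists (c * d); split; first exact: ZM.
  have cc := zcentral hc.
  have cc' : central c^-1 by have [_ [_ h]] := @central_sub G; apply: h.
  have := nPM KN hx hy.
  by rewrite ginvM !gmulA -(gmulA x c^-1 y) (cc' y) !gmulA -(gmulA _ c^-1 d^-1) (cc' d^-1) !gmulA.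
- move=> x [c [hc hx]]; exists c^-1; split; first exact: ZV.
  have cc := zcentral hc.
  have := nPV KN hx.
  by rewrite ginvM ginvK cc.
- move=> x g [c [hc hx]]; exists c; split => //.
  have cc' : central c^-1 by have [_ [_ h]] := @central_sub G; apply: h; exact: zcentral.
  have := nPJ KN g hx.
  by rewrite -!gmulA cc' !gmulA.
Qed.

Lemma a_trivial (T : {set 'I_n}) j : j \notin T -> cg (kerSbar a T) (a j) 1.
Proof.
move=> hj; apply: cg_1.
exists 1; split; first by have [h _] := gen_subgroup_sub (fun x : G => x = prodl a).
rewrite ginv1 gmulr1; apply: normal_closure_in; by exists j.
Qed.

End Main.

Section Main2.
Variable G : grp.
Variables n m : nat.
Variable a : 'I_n -> G.
Variable S : 'I_m -> {set 'I_n}.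
Hypothesis Hgen : forall g : G, gen_subgroup (fun x => exists j, x = a j) g.
Hypothesis Hz : forall g : G, gmul (prodl a) g = gmul g (prodl a).
Hypothesis HS : forall i r, i != r -> #|S i :&: S r| <= 1.
Local Notation "x * y" := (gmul x y).
Local Notation "x ^-1" := (ginv x).
Local Notation "1" := (@gone G).
Local Notation N i := (kerSbar a (S i)).
Let NN i : is_normal (N i) := @N_normal G n a Hz (S i).

Definition Im (t : 'I_m -> G) := exists g', forall i, cg (N i) (t i) g'.

Lemma Im_const g : Im (fun _ => g).
Proof. by exists g => i; apply: (cg_refl (NN i)). Qed.

Lemma Im_mul t u : Im t -> Im u -> Im (fun i => t i * u i).
Proof. by move=> [g hg] [h hh]; exists (g * h) => i; apply: (cg_mul (NN i)). Qed.

Lemma Im_inv t : Im t -> Im (fun i => (t i)^-1).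
Proof. by move=> [g hg]; exists g^-1 => i; apply: (cg_inv (NN i)). Qed.

Lemma Im_cg t u : (forall i, cg (N i) (t i) (u i)) -> Im t -> Im u.
Proof.
move=> htu [g hg]; exists g => i.
apply: (cg_trans (NN i)) (hg i); apply: (cg_sym (NN i)); exact: htu.
Qed.

Definition conj (y g : G) := y^-1 * g * y.

Lemma conj1 g : conj 1 g = g.
Proof. by rewrite /conj ginv1 gmul1 gmulr1. Qed.

Lemma conj_cg i y y' g g' : cg (N i) y y' -> cg (N i) g g' ->
  cg (N i) (conj y g) (conj y' g').
Proof.
move=> hy hg; rewrite /conj.
apply: (cg_mul (NN i)) => //; apply: (cg_mul (NN i)) => //.
exact: (cg_inv (NN i)).
Qed.

Lemma conj_sub (y : 'I_m -> G) : is_subgroup (fun g => Im (fun i => conj (y i) g)).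
Proof.
split; [|split].
- have -> : (fun i => conj (y i) 1) = (fun _ => 1).
    by apply: functional_extensionality => i; rewrite /conj gmulr1 gmulV.
  exact: Im_const.
- move=> g h hg hh.
  have -> : (fun i => conj (y i) (g * h)) = (fun i => conj (y i) g * conj (y i) h).
    apply: functional_extensionality => i; rewrite /conj.
    by rewrite !gmulA -(gmulA _ (y i)) gmulVr gmulr1.
  exact: Im_mul.
- move=> g hg.
  have -> : (fun i => conj (y i) g^-1) = (fun i => (conj (y i) g)^-1).
    apply: functional_extensionality => i; rewrite /conj.
    by rewrite !ginvM ginvK gmulA.
  exact: Im_inv.
Qed.

Definition Y (y : 'I_m -> G) := forall g, Im (fun i => conj (y i) g).

Lemma Y_mul y u : Y y -> Y u -> Y (fun i => y i * u i).
Proof.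
move=> hy hu g; have [g' hg'] := hy g.
apply: (Im_cg _ _ _ (hu g')) => i.
have -> : conj (y i * u i) g = conj (u i) (conj (y i) g).
  by rewrite /conj ginvM !gmulA.
apply: (cg_sym (NN i)); apply: conj_cg; first exact: (cg_refl (NN i)).
exact: hg'.
Qed.

Lemma Y_one : Y (fun _ => 1).
Proof.
move=> g; have -> : (fun i : 'I_m => conj 1 g) = (fun _ => g).
  by apply: functional_extensionality => i; rewrite conj1.
exact: Im_const.
Qed.

Definition iota (i : 'I_m) (x : G) := fun r => if r == i then x else 1.

Lemma y_triv r j y : (y = a j \/ y = (a j)^-1) -> j \notin S r -> cg (N r) y 1.
Proof.
move=> hy hj; have h := @a_trivial G n a _ _ hj.
case: hy => ->; first exact: h.
by rewrite -ginv1; apply: (cg_inv (NN r)).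
Qed.

Lemma card_two i r j k : i != r -> j != k -> j \in S i -> k \in S i ->
  j \in S r -> k \in S r -> False.
Proof.
move=> hir hjk ji ki jr kr.
have := HS _ _ hir.
have sub : [set j; k] \subset S i :&: S r.
  by apply/subsetP => x; rewrite !inE => /orP [] /eqP ->; rewrite ?ji ?ki ?jr ?kr.
have := subset_leq_card sub; rewrite cards2 hjk.
by move=> h1 h2; have := leq_trans h1 h2.
Qed.

Lemma Y_iota_gen i j y : (y = a j \/ y = (a j)^-1) -> Y (iota i y).
Proof.
move=> hy g.
apply: (sub_ind _ _ (conj_sub (iota i y))) (Hgen g).
move=> _ [k ->].
have E : forall r, conj (iota i y r) (a k) = if r == i then conj y (a k) else a k.
  by move=> r; rewrite /iota; case: (r == i) => //; rewrite conj1.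
have triv_k : forall r, k \notin S r -> cg (N r) (conj y (a k)) (a k).
  move=> r hk; have hk1 := @a_trivial G n a _ _ hk.
  apply: (cg_trans (NN r)); last by apply: (cg_sym (NN r)); exact: hk1.
  have -> : 1 = conj y 1 by rewrite /conj gmulr1 gmulV.
  by apply: conj_cg => //; apply: (cg_refl (NN r)).
have triv_j : forall r, j \notin S r -> cg (N r) (conj y (a k)) (a k).
  move=> r hj; rewrite -{2}(conj1 (a k)).
  by apply: conj_cg; [exact: y_triv hy hj | apply: (cg_refl (NN r))].
case hA : [&& j \in S i, k \in S i & j != k].
- move/and3P: hA => [ji ki jk].
  exists (conj y (a k)) => r; rewrite E.
  case: eqP => [_|/eqP ri]; first exact: (cg_refl (NN r)).
  apply: (cg_sym (NN r)).
  case jr : (j \in S r); last by apply: triv_j; rewrite jr.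
  case kr : (k \in S r); last by apply: triv_k; rewrite kr.
  by exfalso; apply: (card_two i r j k _ jk ji ki jr kr); rewrite eq_sym.
- exists (a k) => r; rewrite E.
  case: eqP => [->|_]; last exact: (cg_refl (NN r)).
  case ji : (j \in S i); last by apply: triv_j; rewrite ji.
  case ki : (k \in S i); last by apply: triv_k; rewrite ki.
  move: hA; rewrite ji ki /= => /negbFE /eqP <-.
  have -> : conj y (a j) = a j.
    rewrite /conj; case: hy => ->.
      by rewrite -gmulA (gmulA (a j)^-1) gmulV gmul1.
    by rewrite ginvK -gmulA gmulVr gmulr1.
  exact: (cg_refl (NN i)).
Qed.

Lemma Y_iota i x : Y (iota i x).
Proof.
suff : Y (iota i x) /\ Y (iota i x^-1) by case.
apply: (sub_ind (fun x => exists j, x = a j)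
          (fun x => Y (iota i x) /\ Y (iota i x^-1))) (Hgen x).
- split; [|split].
  + rewrite ginv1; have -> : iota i 1 = (fun _ => 1).
      by apply: functional_extensionality => r; rewrite /iota; case: (r == i).
    by split; apply: Y_one.
  + move=> u v [hu hu'] [hv hv']; split.
    * have -> : iota i (u * v) = (fun r => iota i u r * iota i v r).
        apply: functional_extensionality => r; rewrite /iota.
        by case: (r == i) => //; rewrite gmul1.
      exact: Y_mul.
    * have -> : iota i (u * v)^-1 = (fun r => iota i v^-1 r * iota i u^-1 r).
        apply: functional_extensionality => r; rewrite /iota ginvM.
        by case: (r == i) => //; rewrite gmul1.
      exact: Y_mul.
  + by move=> u [hu hu']; rewrite ginvK.
- move=> _ [j ->]; split; apply: (Y_iota_gen i j); by [left|right].
Qed.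

Lemma Y_all h : Y h.
Proof.
pose hk k := fun r : 'I_m => if r < k then h r else 1.
suff : forall k, Y (hk k).
  move=> /(_ m); have -> // : hk m = h.
  by apply: functional_extensionality => r; rewrite /hk ltn_ord.
elim=> [|k IH].
- have -> : hk 0 = (fun _ => 1) by [].
  exact: Y_one.
- case: (ltnP k m) => km.
  + have -> : hk k.+1 = (fun r => hk k r * iota (Ordinal km) (h (Ordinal km)) r).
      apply: functional_extensionality => r; rewrite /hk /iota ltnS leq_eqVlt.
      case: (ltngtP r k) => [rk|rk|rk] /=.
      * have -> : (r == Ordinal km) = false by apply/eqP => /(congr1 val) /= e; move: rk; rewrite e ltnn.
        by rewrite gmulr1.
      * have -> : (r == Ordinal km) = false by apply/eqP => /(congr1 val) /= e; move: rk; rewrite e ltnn.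
        by rewrite gmul1.
      * have e : r = Ordinal km by apply: val_inj.
        by rewrite -e eqxx gmul1.
    exact: (Y_mul _ _ IH (Y_iota _ _)).
  + have -> : hk k.+1 = hk k.
      apply: functional_extensionality => r; rewrite /hk.
      by rewrite (leq_trans (ltn_ord r) km) (leq_trans (ltn_ord r) (leqW km)).
    exact: IH.
Qed.

End Main2.

Theorem mainTheorem12 (G : grp) (n m : nat) (a : 'I_n -> G)
  (S : 'I_m -> {set 'I_n})
  (Hgen : forall g : G, gen_subgroup (fun x => exists j, x = a j) g)
  (Hz : forall g : G, gmul (prodl a) g = gmul g (prodl a))
  (HS : forall i r, i != r -> #|S i :&: S r| <= 1)
  (Hrank : forall i, exists b : 'I_(#|S i| - 1) -> G,
             free_basis_mod (kerSbar a (S i)) b)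
  (Hbasis : forall i k, k \in S i ->
     free_basis_mod (kerSbar a (S i))
       (fun j : {j : 'I_n | j \in S i :\ k} => a (val j))) :
  forall (h : 'I_m -> G) (g : G), exists g' : G,
    forall i, kerSbar a (S i)
      (gmul (gmul (gmul (ginv (h i)) g) (h i)) (ginv g')).
Proof.
move=> h g.
exact: (@Y_all G n m a S Hgen Hz HS h g).
Qed.
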